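(* (Quantalic McShane–Whitney Extension Theorem.) Let $\mathcal{V}$ be a quantale and let $(X,d)$ be a $\mathcal{V}$-category. For every subset $Y\subseteq X$ and every map $f\colon Y\to\mathcal{V}$ that is non-expansive from $(Y,d|_{Y\times Y})$ to $(\mathcal{V},d_{\mathcal{V}})$, there exists a map $\bar f\colon X\to\mathcal{V}$ that is non-expansive from $(X,d)$ to $(\mathcal{V},d_{\mathcal{V}})$ and satisfies $\bar f(y)=f(y)$ for all $y\in Y$.
   Context: A quantale is a complete lattice $(\mathcal{V},\sqsubseteq)$ equipped with a commutative monoid structure $(\mathcal{V},\otimes,k)$ such that $a\otimes\bigsqcup_i b_i=\bigsqcup_i (a\otimes b_i)$ for all $a$ and all families $(b_i)$. Its residuation $d_{\mathcal{V}}\colon\mathcal{V}\times\mathcal{V}\to\mathcal{V}$ is the map determined by $a\otimes b\sqsubseteq c \iff b\sqsubseteq d_{\mathcal{V}}(a,c)$ for all $a,b,c\in\mathcal{V}$. A $\mathcal{V}$-graph on a set $X$ is a map $d\colon X\times X\to\mathcal{V}$; it is a $\mathcal{V}$-category if $k\sqsubseteq d(x,x)$ and $d(x,y)\otimes d(y,z)\sqsubseteq d(x,z)$ for all $x,y,z\in X$. A map $f\colon X\to Z$ is non-expansive from $(X,d_X)$ to $(Z,d_Z)$ if $d_X(x,x')\sqsubseteq d_Z(f(x),f(x'))$ for all $x,x'\in X$. *)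

(* Defs.v *)
(** Families (b_i) are represented by
    their sets of values, which determine the supremum. *)
Record quantale := Quantale {
  qcar :> Type;
  qle : qcar -> qcar -> Prop;
  qsup : (qcar -> Prop) -> qcar;
  qtensor : qcar -> qcar -> qcar;
  qunit : qcar;
  qle_refl : forall a, qle a a;
  qle_trans : forall a b c, qle a b -> qle b c -> qle a c;
  qle_antisym : forall a b, qle a b -> qle b a -> a = b;
  qsup_ub : forall (S : qcar -> Prop) a, S a -> qle a (qsup S);
  qsup_least : forall (S : qcar -> Prop) u,
      (forall a, S a -> qle a u) -> qle (qsup S) u;
  qtensorA : forall a b c, qtensor a (qtensor b c) = qtensor (qtensor a b) c;
  qtensorC : forall a b, qtensor a b = qtensor b a;
  qtensor1 : forall a, qtensor qunit a = a;
  qtensor_sup : forall a (S : qcar -> Prop),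
      qtensor a (qsup S) = qsup (fun c => exists b, S b /\ c = qtensor a b)
}.

Arguments qle {q}.
Arguments qsup {q}.
Arguments qtensor {q}.
Arguments qunit {q}.

(** The residuation d_V(a,c): the map determined by
    a (x) b <= c  <->  b <= d_V(a,c); in a quantale it is
    the supremum of { b | a (x) b <= c }. *)
Definition resid {V : quantale} (a c : V) : V :=
  qsup (fun b => qle (qtensor a b) c).

Definition is_Vcategory {V : quantale} {X : Type} (d : X -> X -> V) : Prop :=
  (forall x, qle qunit (d x x)) /\
  (forall x y z, qle (qtensor (d x y) (d y z)) (d x z)).

Definition non_expansive {V : quantale} {X Z : Type}
    (dX : X -> X -> V) (dZ : Z -> Z -> V) (f : X -> Z) : Prop :=
  forall x x', qle (dX x x') (dZ (f x) (f x')).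

(* Main.v *)
Require Import Defs.

Lemma tmono (V : quantale) (a b b' : V) : qle b b' -> qle (qtensor a b) (qtensor a b').
Proof.
  intros H.
  set (S := fun c : V => c = b \/ c = b').
  assert (E : qsup S = b').
  { apply qle_antisym.
    - apply qsup_least. intros c [->| ->]; [exact H | apply qle_refl].
    - apply qsup_ub. right; reflexivity. }
  rewrite <- E, qtensor_sup. apply qsup_ub. exists b. split; [left; reflexivity | reflexivity].
Qed.

Lemma resid_le (V : quantale) (a c : V) : qle (qtensor a (resid a c)) c.
Proof.
  unfold resid. rewrite qtensor_sup. apply qsup_least.
  intros x [b [Hb ->]]. exact Hb.
Qed.

Theorem mainTheorem2 (V : quantale) (X : Type) (d : X -> X -> V)
  (hd : is_Vcategory d) (Y : X -> Prop) (f : {x : X | Y x} -> V)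
  (hf : non_expansive (fun y y' : {x : X | Y x} => d (proj1_sig y) (proj1_sig y'))
          (@resid V) f) :
  exists fbar : X -> V,
    non_expansive d (@resid V) fbar /\
    (forall (y : X) (hy : Y y), fbar y = f (exist _ y hy)).
Proof.
  destruct hd as [hrefl htri].
  exists (fun x => qsup (fun c => exists y : {x | Y x}, c = qtensor (f y) (d (proj1_sig y) x))).
  split.
  - intros x x'. unfold resid at 1. apply qsup_ub.
    rewrite qtensorC, qtensor_sup. apply qsup_least.
    intros c [c0 [[y ->] ->]].
    apply qle_trans with (qtensor (f y) (d (proj1_sig y) x')).
    + rewrite qtensorC, <- qtensorA. apply tmono.
      apply htri.
    + apply qsup_ub. exists y. reflexivity.
  - intros y0 hy. apply qle_antisym.
    + apply qsup_least. intros c [y ->].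
      apply qle_trans with (qtensor (f y) (resid (f y) (f (exist _ y0 hy)))).
      * apply tmono. exact (hf y (exist _ y0 hy)).
      * apply resid_le.
    + apply qle_trans with (qtensor (f (exist _ y0 hy)) (d y0 y0)).
      * apply qle_trans with (qtensor (f (exist _ y0 hy)) qunit).
        -- rewrite qtensorC, qtensor1. apply qle_refl.
        -- apply tmono. apply hrefl.
      * apply qsup_ub. exists (exist _ y0 hy). reflexivity.
Qed.
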